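(* If $\mathcal N\in\mathrm{Ch}(A'B',AB)$ is no-signaling from $A'$ to $B$, then $S_\infty[A|B]_{\mathcal N}\ge-\log|A|$.
   Context: All systems are finite-dimensional; $|X|$ denotes dimension; $\log$ base 2; $\mathrm{St}(X)$ density operators; $\mathrm{Ch}(X',X)$ quantum channels. $\mathcal R^{\mathbb 1}_{A'\to A}(X):=\operatorname{tr}(X)\mathbb 1_A$. $D_\infty(\rho\|\sigma):=\log\inf\{\lambda:\rho\le\lambda\sigma\}$; for a channel $\mathcal M$ and CP map $\mathcal M'$, $D_\infty[\mathcal M\|\mathcal M']:=\sup_{\rho\in\mathrm{St}(RX')}D_\infty((\mathrm{id}\otimes\mathcal M)(\rho)\|(\mathrm{id}\otimes\mathcal M')(\rho))$. Conditional channel min-entropy: $S_\infty[A|B]_{\mathcal N}:=-\inf_{\mathcal Q\in\mathrm{Ch}(B',B)}D_\infty[\mathcal N\|\mathcal R^{\mathbb 1}_{A'\to A}\otimes\mathcal Q]$. $\mathcal N$ is no-signaling (semicausal) from $A'$ to $B$ if there is $\mathcal Q^{\mathcal N}\in\mathrm{Ch}(B',B)$ with $\operatorname{tr}_A\circ\mathcal N=\operatorname{tr}_{A'}\otimes\mathcal Q^{\mathcal N}$. *)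

(* Defs.v *)
From HB Require Import structures.
From mathcomp Require Import all_boot all_order all_algebra.
From mathcomp Require Import complex mxtens.
From mathcomp Require Import boolp classical_sets reals constructive_ereal ereal exp.

Set Implicit Arguments.
Unset Strict Implicit.
Unset Printing Implicit Defensive.

Import Order.TTheory GRing.Theory Num.Theory.
Local Open Scope ring_scope.
Local Open Scope classical_set_scope.

Section Quantum.
Variable R : realType.
Local Notation C := (R[i]).

Definition adjmx m n (A : 'M[C]_(m, n)) : 'M[C]_(n, m) := (map_mx Num.conj A)^T.

Definition psd n (A : 'M[C]_n) : Prop :=
  forall v : 'cV[C]_n, 0 <= (adjmx v *m A *m v) 0 0.

Definition loewner n (A B : 'M[C]_n) : Prop := psd (B - A).

Definition state n (rho : 'M[C]_n) : Prop := psd rho /\ \tr rho = 1.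

Definition is_linmap m n (f : 'M[C]_m -> 'M[C]_n) : Prop :=
  forall (c : C) (X Y : 'M[C]_m), f (c *: X + Y) = c *: f X + f Y.

(* tensor product f (x) g of maps, the composite system being indexed by
   mxtens_index (consistent with the Kronecker product *t) *)
Definition tensmap m1 n1 m2 n2 (f : 'M[C]_m1 -> 'M[C]_n1)
  (g : 'M[C]_m2 -> 'M[C]_n2) : 'M[C]_(m1 * m2) -> 'M[C]_(n1 * n2) :=
  fun X => \sum_(i : 'I_m1) \sum_(j : 'I_m1) \sum_(k : 'I_m2) \sum_(l : 'I_m2)
     X (mxtens_index (i, k)) (mxtens_index (j, l)) *:
       (f (delta_mx i j) *t g (delta_mx k l)).

Definition idtens r m n (f : 'M[C]_m -> 'M[C]_n) : 'M[C]_(r * m) -> 'M[C]_(r * n) :=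
  tensmap (@id 'M[C]_r) f.

Definition is_cp m n (f : 'M[C]_m -> 'M[C]_n) : Prop :=
  forall (r : nat) (X : 'M[C]_(r * m)), psd X -> psd (idtens (r:=r) f X).

Definition is_tp m n (f : 'M[C]_m -> 'M[C]_n) : Prop :=
  forall X : 'M[C]_m, \tr (f X) = \tr X.

Definition is_cpmap m n (f : 'M[C]_m -> 'M[C]_n) : Prop :=
  is_linmap f /\ is_cp f.

Definition is_channel m n (f : 'M[C]_m -> 'M[C]_n) : Prop :=
  [/\ is_linmap f, is_cp f & is_tp f].

Definition replace1 a' a : 'M[C]_a' -> 'M[C]_a := fun X => \tr X *: 1%:M.

Definition ptrace1 a b (X : 'M[C]_(a * b)) : 'M[C]_b :=
  \matrix_(k, l) \sum_(i : 'I_a) X (mxtens_index (i, k)) (mxtens_index (i, l)).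

Definition no_signaling a' b' a b (N : 'M[C]_(a' * b') -> 'M[C]_(a * b)) : Prop :=
  exists Q : 'M[C]_b' -> 'M[C]_b, is_channel Q /\
    forall X : 'M[C]_(a' * b'), ptrace1 (N X) = Q (ptrace1 X).

Definition log2 (x : R) : R := ln x / ln 2.

Definition elog2 (x : \bar R) : \bar R :=
  match x with
  | EFin r => if r <= 0 then -oo%E else (log2 r)%:E
  | +oo%E => +oo%E
  | -oo%E => -oo%E
  end.

(* D_oo(rho || sigma) := log inf { lambda : rho <= lambda sigma }  (inf of empty = +oo) *)
Definition Dmax n (rho sigma : 'M[C]_n) : \bar R :=
  elog2 (ereal_inf [set (lam%:E)%E | lam in
                    [set lam : R | loewner rho ((lam%:C)%C *: sigma)]]).

Definition Dmax_chan m n (M M' : 'M[C]_m -> 'M[C]_n) : \bar R :=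
  ereal_sup [set x | exists (r : nat) (rho : 'M[C]_(r * m)),
                       state rho /\ x = Dmax (idtens (r:=r) M rho) (idtens (r:=r) M' rho)].

Definition Smin a' b' a b (N : 'M[C]_(a' * b') -> 'M[C]_(a * b)) : \bar R :=
  (- ereal_inf [set x | exists Q : 'M[C]_b' -> 'M[C]_b,
                   is_channel Q /\ x = Dmax_chan N (tensmap (@replace1 a' a) Q)])%E.

End Quantum.

(* Main.v *)
Require Import Defs.
From HB Require Import structures.
From mathcomp Require Import all_boot all_order all_algebra.
From mathcomp Require Import complex mxtens.
From mathcomp Require Import boolp classical_sets reals constructive_ereal ereal exp.
From mathcomp Require Import ring.
Import Order.TTheory GRing.Theory Num.Theory.
Local Open Scope ring_scope.

Section Aux.
Variable R : realType.
Local Notation C := (R[i]).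
Local Notation ix := (fun i j => mxtens_index (i, j)).

Lemma sum1 n (i0 : 'I_n) (F : 'I_n -> C) :
  (forall i, i != i0 -> F i = 0) -> \sum_i F i = F i0.
Proof. by move=> H; rewrite (bigD1 i0) //= big1 ?addr0 // => i /H. Qed.

Lemma sum_tens m n (F : 'I_(m * n) -> C) :
  \sum_u F u = \sum_(i < m) \sum_(j < n) F (mxtens_index (i, j)).
Proof.
rewrite pair_bigA /= (reindex (@mxtens_index m n)) /=.
  by apply: eq_bigr => -[i j] _.
by exists (@mxtens_unindex m n) => x _; [apply: mxtens_indexK | apply: mxtens_unindexK].
Qed.

Lemma tensmapE m1 n1 m2 n2 (f : 'M[C]_m1 -> 'M[C]_n1) (g : 'M[C]_m2 -> 'M[C]_n2)
  X i1 i2 j1 j2 :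
  tensmap f g X (mxtens_index (i1, i2)) (mxtens_index (j1, j2)) =
  \sum_i \sum_j \sum_k \sum_l X (mxtens_index (i, k)) (mxtens_index (j, l)) *
     (f (delta_mx i j) i1 j1 * g (delta_mx k l) i2 j2).
Proof.
rewrite /tensmap; do 4 (rewrite summxE; apply: eq_bigr => ? _).
by rewrite mxE tensmxE.
Qed.

Lemma idtensE r m n (f : 'M[C]_m -> 'M[C]_n) X p x q y :
  idtens (r:=r) f X (mxtens_index (p, x)) (mxtens_index (q, y)) =
  \sum_s \sum_t X (mxtens_index (p, s)) (mxtens_index (q, t)) * f (delta_mx s t) x y.
Proof.
rewrite /idtens tensmapE (bigD1 p) //= [X in _ + X]big1 ?addr0 => [|i /negbTE Hi]; last first.
  by apply: big1 => j _; apply: big1 => k _; apply: big1 => l _;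
     rewrite mxE eq_sym Hi /= mul0r mulr0.
rewrite (bigD1 q) //= [X in _ + X]big1 ?addr0 => [|j /negbTE Hj]; last first.
  by apply: big1 => k _; apply: big1 => l _;
     rewrite mxE eq_sym Hj andbF /= mul0r mulr0.
by apply: eq_bigr => s _; apply: eq_bigr => t _; rewrite mxE !eqxx mul1r.
Qed.

Section Lin.
Variables m n : nat.
Variable f : 'M[C]_m -> 'M[C]_n.
Hypothesis hf : is_linmap f.
Lemma lin0 : f 0 = 0.
Proof.
have := hf 1 0 0; rewrite !scale1r addr0 => H.
by apply: (addrI (f 0)); rewrite addr0 -H.
Qed.
Lemma linD X Y : f (X + Y) = f X + f Y.
Proof. by have := hf 1 X Y; rewrite !scale1r. Qed.
Lemma linZ c X : f (c *: X) = c *: f X.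
Proof. by have := hf c X 0; rewrite !addr0 lin0 addr0. Qed.
Lemma lin_sum I (r : seq I) (F : I -> 'M[C]_m) :
  f (\sum_(i <- r) F i) = \sum_(i <- r) f (F i).
Proof. exact: (big_morph f linD lin0). Qed.
End Lin.



Lemma summxC m n I (r : seq I) (F : I -> 'M[C]_(m, n)) i j :
  (\sum_(k <- r) F k) i j = \sum_(k <- r) (F k i j : C).
Proof. exact: summxE. Qed.

Lemma trace_delta n (i j : 'I_n) : \tr (delta_mx i j : 'M[C]_n) = (i == j)%:R.
Proof.
rewrite /mxtrace (bigD1 i) //= [X in _ + X]big1 ?addr0 => [|k /negbTE Hk]; last first.
  by rewrite mxE Hk.
by rewrite mxE eqxx /= eq_sym.
Qed.

Lemma replaceE a' b' a b (Q : 'M[C]_b' -> 'M[C]_b) (hQ : is_linmap Q)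
  (X : 'M[C]_(a' * b')) (i j : 'I_a) (e f : 'I_b) :
  tensmap (@replace1 R a' a) Q X (mxtens_index (i, e)) (mxtens_index (j, f)) =
  (i == j)%:R * Q (ptrace1 X) e f.
Proof.
transitivity (\sum_i' \sum_k \sum_l X (mxtens_index (i', k)) (mxtens_index (i', l)) *
   ((i == j)%:R * Q (delta_mx k l) e f)).
  rewrite tensmapE; apply: eq_bigr => i' _.
  rewrite (bigD1 i') //= [X in _ + X]big1 ?addr0 => [|j' /negbTE Hj]; last first.
    by apply: big1 => k _; apply: big1 => l _;
       rewrite /replace1 mxE trace_delta eq_sym Hj mul0r mul0r mulr0.
  apply: eq_bigr => k _; apply: eq_bigr => l _.
  by rewrite /replace1 !mxE trace_delta eqxx mul1r.
rewrite (matrix_sum_delta (ptrace1 X)) (@lin_sum _ _ _ hQ) summxC mulr_sumr.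
rewrite exchange_big; apply: eq_bigr => k _.
rewrite (@lin_sum _ _ _ hQ) summxC mulr_sumr.
rewrite exchange_big; apply: eq_bigr => l _.
rewrite (@linZ _ _ _ hQ) !mxE mulr_suml mulr_sumr.
apply: eq_bigr => i' _.
by rewrite mulrCA mulrA.
Qed.



Definition Bs n (M : 'M[C]_n) (x y : 'cV[C]_n) : C :=
  \sum_u \sum_w (x u 0)^* * M u w * y w 0.
Arguments Bs {n}.

Lemma qfE n (M : 'M[C]_n) (x y : 'cV[C]_n) : (adjmx x *m M *m y) 0 0 = Bs M x y.
Proof.
rewrite /Bs mxE exchange_big; apply: eq_bigr => w _.
rewrite mxE mulr_suml; apply: eq_bigr => u _.
by rewrite /adjmx !mxE.
Qed.

Lemma BsB n (M : 'M[C]_n) x y :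
  Bs M (x - y) (x - y) = Bs M x x - Bs M x y - Bs M y x + Bs M y y.
Proof.
rewrite /Bs -!sumrB -big_split; apply: eq_bigr => u _.
rewrite -!sumrB -big_split; apply: eq_bigr => w _.
rewrite !mxE rmorphB /=; ring.
Qed.

Lemma Bsuml n (M : 'M[C]_n) a (x : 'I_a -> 'cV[C]_n) y :
  Bs M (\sum_i x i) y = \sum_i Bs M (x i) y.
Proof.
rewrite /Bs [RHS]exchange_big; apply: eq_bigr => u _.
rewrite [RHS]exchange_big; apply: eq_bigr => w _.
by rewrite summxC rmorph_sum !mulr_suml.
Qed.

Lemma Bsumr n (M : 'M[C]_n) a x (y : 'I_a -> 'cV[C]_n) :
  Bs M x (\sum_i y i) = \sum_i Bs M x (y i).
Proof.
rewrite /Bs [RHS]exchange_big; apply: eq_bigr => u _.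
rewrite [RHS]exchange_big; apply: eq_bigr => w _.
by rewrite summxC mulr_sumr.
Qed.

Lemma psdB n (M : 'M[C]_n) : psd M -> forall v, 0 <= Bs M v v.
Proof. by move=> hM v; rewrite -qfE; apply: hM. Qed.

Lemma cs n (M : 'M[C]_n) (hM : psd M) a (w : 'I_a -> 'cV[C]_n) :
  Bs M (\sum_i w i) (\sum_i w i) <= a%:R * \sum_i Bs M (w i) (w i).
Proof.
have H : 0 <= \sum_i \sum_j Bs M (w i - w j) (w i - w j).
  by apply: sumr_ge0 => i _; apply: sumr_ge0 => j _; apply: psdB.
have E : \sum_i \sum_j Bs M (w i - w j) (w i - w j) =
   2 * (a%:R * \sum_i Bs M (w i) (w i) - Bs M (\sum_i w i) (\sum_i w i)).
  under eq_bigr do under eq_bigr do rewrite BsB.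
  under eq_bigr do rewrite big_split sumrB sumrB /=.
  rewrite big_split sumrB sumrB /=.
  rewrite Bsuml; under [X in _ = _ * (_ - X)]eq_bigr do rewrite Bsumr.
  rewrite [X in _ - _ - X + _]exchange_big /=.
  under [X in X - _ - _ + _]eq_bigr do rewrite sumr_const card_ord.
  rewrite [X in _ - _ - _ + X]sumr_const card_ord mulr_natl.
  rewrite ?sumrMnl; set U := (\sum_(i < a) Bs M (w i) (w i)) *+ a; set T := \sum_(i < a) \sum_(i0 < a) Bs M (w i) (w i0). ring.
by rewrite E pmulr_rge0 // subr_ge0 in H.
Qed.


Definition tri r a b (p : 'I_r) (i : 'I_a) (e : 'I_b) : 'I_(r * (a * b)) :=
  mxtens_index (p, mxtens_index (i, e)).
Arguments tri {r a b}.

Lemma sum3 r a b (F : 'I_(r * (a * b)) -> C) :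
  \sum_u F u = \sum_p \sum_i \sum_e F (tri p i e).
Proof. rewrite sum_tens; apply: eq_bigr => p _; exact: sum_tens. Qed.

Lemma Bs3 r a b (M : 'M[C]_(r * (a * b))) x y :
  Bs M x y = \sum_p \sum_i \sum_e \sum_q \sum_j \sum_f
    (x (tri p i e) 0)^* * M (tri p i e) (tri q j f) * y (tri q j f) 0.
Proof.
rewrite /Bs sum3; apply: eq_bigr => p _; apply: eq_bigr => i _;
apply: eq_bigr => e _; exact: sum3.
Qed.

Definition uvec r a b (v : 'cV[C]_(r * (a * b))) (i k : 'I_a) : 'cV[C]_(r * (a * b)) :=
  \col_u (if (mxtens_unindex (mxtens_unindex u).2).1 == k then
     v (mxtens_index ((mxtens_unindex u).1,
          mxtens_index (i, (mxtens_unindex (mxtens_unindex u).2).2))) 0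
   else 0).
Arguments uvec {r a b}.

Lemma uvecE r a b (v : 'cV[C]_(r * (a * b))) i k p k' e :
  uvec v i k (tri p k' e) 0 = (k' == k)%:R * v (tri p i e) 0.
Proof.
rewrite /uvec mxE /tri !mxtens_indexK /=.
by case: eqP => _; rewrite ?mul1r ?mul0r.
Qed.


Lemma BsZ n (M N : 'M[C]_n) (c : C) v :
  Bs (c *: M - N) v v = c * Bs M v v - Bs N v v.
Proof.
rewrite /Bs mulr_sumr -sumrB; apply: eq_bigr => u _.
rewrite mulr_sumr -sumrB; apply: eq_bigr => w _.
rewrite !mxE; ring.
Qed.

Lemma key r a b (Y Z : 'M[C]_(r * (a * b))) (hY : psd Y)
  (hZ : forall p q i j e f, Z (tri p i e) (tri q j f) =
          (i == j)%:R * \sum_k Y (tri p k e) (tri q k f)) :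
  psd (a%:R *: Z - Y).
Proof.
move=> v; rewrite qfE BsZ subr_ge0.
have Hv : v = \sum_i uvec v i i.
  apply/matrixP => u z; rewrite summxC (ord1 z).
  case: (mxtens_indexP u) => p x; case: (mxtens_indexP x) => i e.
  change (mxtens_index (p, mxtens_index (i, e))) with (tri p i e).
  under eq_bigr do rewrite uvecE.
  rewrite (bigD1 i) //= big1 ?addr0 ?eqxx ?mul1r // => j /negbTE Hj.
  by rewrite eq_sym Hj mul0r.
have HZ : Bs Z v v = \sum_i \sum_k Bs Y (uvec v i k) (uvec v i k).
  rewrite Bs3.
  transitivity (\sum_p \sum_i \sum_e \sum_q \sum_f \sum_k
     (v (tri p i e) 0)^* * Y (tri p k e) (tri q k f) * v (tri q i f) 0).
    apply: eq_bigr => p _; apply: eq_bigr => i _; apply: eq_bigr => e _;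
      apply: eq_bigr => q _.
    rewrite (bigD1 i) //= [X in _ + X]big1 ?addr0 => [|j /negbTE Hj]; last first.
      by apply: big1 => f _; rewrite hZ eq_sym Hj mul0r mulr0 mul0r.
    apply: eq_bigr => f _; rewrite hZ eqxx mul1r mulr_sumr mulr_suml.
    by apply: eq_bigr => k _.
  transitivity (\sum_i \sum_k \sum_p \sum_e \sum_q \sum_f
     (v (tri p i e) 0)^* * Y (tri p k e) (tri q k f) * v (tri q i f) 0);
    last first.
    apply: eq_bigr => i _; apply: eq_bigr => k _; rewrite Bs3; apply: eq_bigr => p _.
    apply/esym; rewrite (bigD1 k) //= [X in _ + X]big1 ?addr0 => [|j /negbTE Hj]; last first.
      by apply: big1 => e _; apply: big1 => q _; apply: big1 => j' _;
        apply: big1 => f _; rewrite uvecE Hj mul0r rmorph0 !mul0r.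
    apply: eq_bigr => e _; apply: eq_bigr => q _.
    rewrite (bigD1 k) //= [X in _ + X]big1 ?addr0 => [|j /negbTE Hj]; last first.
      apply: big1 => f _; by rewrite !uvecE Hj mul0r mulr0.
    by apply: eq_bigr => f _; rewrite !uvecE eqxx !mul1r.
  rewrite exchange_big; apply: eq_bigr => i _.
  rewrite [RHS]exchange_big; apply: eq_bigr => p _.
  rewrite [RHS]exchange_big; apply: eq_bigr => e _.
  rewrite [RHS]exchange_big; apply: eq_bigr => q _.
  by rewrite [RHS]exchange_big.
rewrite HZ {1 2}Hv; have H1 := @cs _ _ hY _ (fun i => uvec v i i); apply: (le_trans H1).
rewrite ler_wpM2l ?ler0n //; apply: ler_sum => i _.
rewrite (bigD1 i) //= lerDl; apply: sumr_ge0 => k _; exact: psdB.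
Qed.

End Aux.

Lemma elog2_le (R : realType) (x : \bar R) (y : R) :
  0 < y -> (x <= y%:E)%E -> (elog2 x <= (log2 y)%:E)%E.
Proof.
move=> y0; case: x => [x||] //=; rewrite ?leNye //.
rewrite lee_fin => hxy; case: ifPn => hx; first by rewrite leNye.
rewrite lee_fin /log2 ler_wpM2r //.
  by rewrite invr_ge0 ltW // ln_gt0 // ltr1n.
by rewrite ler_ln ?posrE ?ltNge // -ltNge.
Qed.

Lemma natC (R : realType) (n : nat) : ((n%:R : R)%:C)%C = n%:R :> R[i].
Proof. exact: rmorph_nat. Qed.

Theorem proposition12 (R : realType) (a' b' a b : nat)
  (Ha' : (0 < a')%N) (Hb' : (0 < b')%N) (Ha : (0 < a)%N) (Hb : (0 < b)%N)
  (N : 'M[R[i]]_(a' * b') -> 'M[R[i]]_(a * b)) :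
  is_channel N -> no_signaling N ->
  (- (log2 (a%:R : R))%:E <= Smin N)%E.
Proof.
move=> [linN cpN tpN] [Q [chQ hQ]]; case: (chQ) => linQ _ _.
rewrite /Smin leeN2.
apply: (@le_trans _ _ (Dmax_chan N (tensmap (@replace1 R a' a) Q))).
  by apply: ereal_inf_lbound; exists Q.
rewrite /Dmax_chan; apply: ge_ereal_sup => x [r [rho [[psdrho _] ->]]].
rewrite /Dmax; apply: elog2_le; first by rewrite ltr0n.
apply: ereal_inf_lbound; eexists; last reflexivity.
rewrite /loewner /= natC.
apply: key; first exact: cpN.
move=> p q i j e f.
rewrite /tri idtensE.
under eq_bigr do under eq_bigr do rewrite (@replaceE _ _ _ _ _ _ linQ) -hQ /ptrace1 mxE.
under [X in _ * X]eq_bigr do rewrite idtensE.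
rewrite [RHS]mulr_sumr; under [RHS]eq_bigr do rewrite mulr_sumr.
rewrite [RHS]exchange_big; apply: eq_bigr => s _.
under [RHS]eq_bigr do rewrite mulr_sumr.
rewrite [RHS]exchange_big; apply: eq_bigr => t _.
rewrite !mulr_sumr; apply: eq_bigr => k _.
by rewrite mulrCA.
Qed.
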